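(* Let $T=(V(T),E(T))$ be a rooted directed tree with $k\geq1$ vertices and root $r$. For a bijection $\phi\colon V(T)\to\{X_1,\dots,X_k\}$ set \[\langle T,\phi\rangle=\frac{\prod_{v\in V(T)\setminus\{r\}}\phi(v)}{\prod_{(v_1\to v_2)\in E(T)}\bigl(\phi(v_1)-\phi(v_2)\bigr)}\in\mathbb{Q}(X_1,\dots,X_k),\qquad \langle T\rangle=\sum_{\phi}\langle T,\phi\rangle,\] the sum running over all bijections $\phi\colon V(T)\to\{X_1,\dots,X_k\}$. Then $\langle T\rangle$ is a nonzero integer.
   Context: A rooted directed tree is a tree (connected acyclic graph) in which each edge carries an orientation (arbitrary, not necessarily towards or away from the root) and one vertex is distinguished as the root. $X_1,\dots,X_k$ are independent commuting variables. *)

(* Defs.v *)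
From HB Require Import structures.
From mathcomp Require Import all_boot all_order all_algebra all_fingroup.
Set Implicit Arguments. Unset Strict Implicit. Unset Printing Implicit Defensive.
Import Order.TTheory GRing.Theory Num.Theory.
Local Open Scope ring_scope.

(* Vertices of the tree are 'I_k; directed edges are a list of ordered
   pairs (v1, v2) meaning v1 -> v2. *)

Definition und_adj (k : nat) (E : seq ('I_k * 'I_k)) : rel 'I_k :=
  fun u v => ((u, v) \in E) || ((v, u) \in E).

(* The underlying undirected (multi)graph is a tree: no loops, exactly k-1
   edges, and connected (k-1 edges + connected on k vertices = tree). *)
Definition is_tree (k : nat) (E : seq ('I_k * 'I_k)) : Prop :=
  [/\ size E = k.-1,
      all (fun e => e.1 != e.2) E &
      forall u v : 'I_k, connect (und_adj E) u v].

(* <T, phi> evaluated at X_i := x i, where the bijection phi : V -> {X_1..X_k}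
   is encoded by the permutation s via phi(v) = X_(s v). *)
Definition bracket_phi (k : nat) (E : seq ('I_k * 'I_k)) (r : 'I_k)
    (s : 'S_k) (x : 'I_k -> rat) : rat :=
  (\prod_(v < k | v != r) x (s v)) /
  (\prod_(e <- E) (x (s e.1) - x (s e.2))).

Definition bracket (k : nat) (E : seq ('I_k * 'I_k)) (r : 'I_k)
    (x : 'I_k -> rat) : rat :=
  \sum_(s : 'S_k) bracket_phi E r s x.

(* Main.v *)
Require Import Defs.
From HB Require Import structures.
From mathcomp Require Import all_boot all_order all_algebra all_fingroup.
Import Order.TTheory GRing.Theory Num.Theory.
Local Open Scope ring_scope.
From mathcomp Require Import zify ring lra.

Set Implicit Arguments. Unset Strict Implicit. Unset Printing Implicit Defensive.

Section Graph.
Local Open Scope nat_scope.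
Variables (V : finType) (ed : rel V).
Hypothesis edirr : irreflexive ed.

Definition adj : rel V := fun u v => ed u v || ed v u.
Definition Nb (S : {set V}) v := [set w in S | adj v w].
Definition odeg (S : {set V}) v : nat := \sum_(w in S) (ed v w + ed w v).
Definition nedges (S : {set V}) : nat := \sum_(u in S) \sum_(w in S) ed u w.
Definition srel (S : {set V}) : rel V := fun a b => [&& a \in S, b \in S & adj a b].
Definition conn (S : {set V}) := forall u v : V, u \in S -> v \in S -> connect (srel S) u v.
Definition tree (S : {set V}) := conn S /\ nedges S < #|S|.

Lemma adjC u v : adj u v = adj v u.
Proof. by rewrite /adj orbC. Qed.

Lemma adj_irr v : adj v v = false.
Proof. by rewrite /adj edirr. Qed.

Lemma sum_odeg (S : {set V}) : \sum_(v in S) odeg S v = (nedges S).*2.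
Proof.
rewrite /odeg /nedges -addnn.
under eq_bigr do rewrite big_split /=.
by rewrite big_split /= [X in _ + X = _]exchange_big.
Qed.

Lemma odeg_sub (X S : {set V}) v : X \subset S -> odeg X v <= odeg S v.
Proof.
move=> sXS; rewrite /odeg [leqRHS](big_setID X) /=.
by rewrite (setIidPr sXS) leq_addr.
Qed.

Lemma sum_pos_ex (S : {set V}) (F : V -> nat) :
  0 < \sum_(w in S) F w -> exists2 w, w \in S & 0 < F w.
Proof.
move=> H; case: (boolP [exists w in S, 0 < F w]) => [/exists_inP [w ? ?]|/exists_inPn H2]; first by exists w.
move: H; rewrite big1 // => w /H2; by rewrite lt0n negbK => /eqP.
Qed.

Lemma odeg_pos (S : {set V}) v : tree S -> 1 < #|S| -> v \in S -> 0 < odeg S v.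
Proof.
move=> [cS _] /card_gt1P [x [y [xS yS xy]]] vS.
have [u [uS uv]] : exists u, u \in S /\ u != v.
  case: (eqVneq x v) => [exv|]; last by exists x.
  by exists y; split => //; rewrite -exv eq_sym.
move: (cS v u vS uS) => /connectP [[|a p] /= pth eu]; first by rewrite eu eqxx in uv.
move: pth => /andP [/and3P [_ aS ava] _].
rewrite /odeg (bigD1 a) //=.
by move: ava; rewrite /adj; case: (ed v a); case: (ed a v).
Qed.

Lemma leaf_uniq (S : {set V}) l a b : odeg S l = 1 -> a \in S -> b \in S ->
  adj l a -> adj l b -> a = b.
Proof.
move=> H aS bS la lb; apply/eqP/negPn/negP => ab.
move: H; rewrite /odeg (bigD1 a) //= (bigD1 b) /=; last by rewrite bS eq_sym.
move: la lb; rewrite /adj.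
by case: (ed l a); case: (ed a l); case: (ed l b); case: (ed b l).
Qed.

Lemma nedgesD1 (S : {set V}) l : l \in S -> nedges S = nedges (S :\ l) + odeg S l.
Proof.
move=> lS; rewrite /nedges /odeg (bigD1 l) //= big_split /=.
have -> : \sum_(i in S | i != l) \sum_(w in S) ed i w =
          \sum_(i in S | i != l) (ed i l + \sum_(w in S :\ l) ed i w).
  apply: eq_bigr => i _; rewrite (bigD1 l) //=; congr (_ + _).
  by apply: eq_bigl => w; rewrite in_setD1 andbC.
rewrite big_split /=.
have -> : \sum_(i in S | i != l) \sum_(w in S :\ l) ed i w =
          \sum_(u in S :\ l) \sum_(w in S :\ l) ed u w.
  by apply: eq_bigl => w; rewrite in_setD1 andbC.
have -> : \sum_(i in S | i != l) ed i l = \sum_(i in S) ed i l.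
  by rewrite [RHS](bigD1 l) //= edirr add0n.
lia.
Qed.

Lemma tree_rem (S : {set V}) l : tree S -> l \in S -> odeg S l = 1 -> 1 < #|S| ->
  tree (S :\ l).
Proof.
move=> [cS eS] lS dl gt1; split; last first.
  by move: eS; rewrite (nedgesD1 lS) dl (cardsD1 l S) lS /=; lia.
have claim : forall x s, x \in S :\ l -> path (srel S) x s ->
  (last x s != l -> connect (srel (S :\ l)) x (last x s)) /\
  (last x s = l -> forall a, a \in S -> adj l a -> connect (srel (S :\ l)) x a).
  move=> x s xSl; elim/last_ind: s => [|s z IH] /=.
    split=> [_|xl]; first exact: connect0.
    by move: xSl; rewrite xl in_setD1 eqxx.
  rewrite rcons_path last_rcons => /andP [ps /and3P [yS zS yz]].
  have [IH1 IH2] := IH ps.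
  split.
    move=> zl; case: (eqVneq (last x s) l) => [yl|yl].
      by apply: IH2 => //; rewrite -yl.
    apply: connect_trans (IH1 yl) (connect1 _).
    by rewrite /srel !in_setD1 yl zl yS zS yz.
  move=> zl a aS la.
  have yl : last x s != l.
    by apply/eqP => e; move: yz; rewrite e zl adj_irr.
  have -> : a = last x s.
    by apply: (leaf_uniq dl aS yS la); rewrite adjC -zl.
  exact: IH1.
move=> u v uS vS.
have uS' : u \in S by move: uS; rewrite in_setD1 => /andP [].
have vS' : v \in S by move: vS; rewrite in_setD1 => /andP [].
move: (cS u v uS' vS') => /connectP [s ps ev].
have [C1 _] := claim u s uS ps.
rewrite ev; apply: C1; rewrite -ev.
by move: vS; rewrite in_setD1 => /andP [].
Qed.

Lemma two_leaves (S : {set V}) : tree S -> 1 < #|S| ->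
  1 < #|[set v in S | odeg S v == 1]|.
Proof.
move=> tS gt1.
have H : forall v, v \in S -> 2 <= odeg S v + (odeg S v == 1).
  move=> v vS; have := odeg_pos tS gt1 vS.
  by case: (odeg S v) => [|[|n]].
have : \sum_(v in S) 2 <= \sum_(v in S) (odeg S v + (odeg S v == 1)).
  by apply: leq_sum.
rewrite big_split /= sum_odeg sum_nat_const.
have -> : \sum_(i in S) (odeg S i == 1) = #|[set v in S | odeg S v == 1]|.
  rewrite -sum1_card big_mkcond /= [RHS]big_mkcond /=.
  by apply: eq_bigr => i _; rewrite inE; case: (i \in S); case: (odeg S i == 1).
case: tS => _ eS.
rewrite -!muln2; set L := #|_|; lia.
Qed.

Lemma leaf_ex (S : {set V}) : tree S -> 1 < #|S| ->
  exists l1 l2, [/\ l1 \in S, l2 \in S, l1 != l2, odeg S l1 = 1 & odeg S l2 = 1].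
Proof.
move=> tS gt1; have /card_gt1P [x [y [xL yL xy]]] := two_leaves tS gt1.
move: xL yL; rewrite !inE => /andP [xS /eqP xl] /andP [yS /eqP yl].
by exists x, y.
Qed.

Lemma core_gt1 (S X : {set V}) x : X \subset S -> x \in X ->
  (forall z, z \in X -> 1 < odeg X z) -> 1 < #|S|.
Proof.
move=> sXS xX Hd.
have := leq_trans (Hd x xX) (odeg_sub x sXS).
rewrite /odeg => H.
have /sum_pos_ex [w wS pw] : 0 < \sum_(w in S) (ed x w + ed w x) by apply: leq_trans H.
apply/card_gt1P; exists x, w; split => //; first exact: (subsetP sXS).
by apply/eqP => e; move: pw; rewrite e edirr.
Qed.

Lemma no_core n (S : {set V}) : #|S| = n -> tree S -> forall X : {set V}, X \subset S ->
  forall x, x \in X -> (forall z, z \in X -> 1 < odeg X z) -> False.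
Proof.
elim: n S => [|n IH] S cS tS X sXS x xX Hd;
  have gt1 := core_gt1 sXS xX Hd; first by rewrite cS in gt1.
have [l [_ [lS _ _ dl _]]] := leaf_ex tS gt1.
have lX : l \notin X.
  apply/negP => lX; have := leq_trans (Hd l lX) (odeg_sub l sXS).
  by rewrite dl.
apply: (IH (S :\ l) _ (tree_rem tS lS dl gt1) X _ x xX Hd).
  by move: cS; rewrite (cardsD1 l S) lS add1n => -[].
by apply/subsetP => z zX; rewrite in_setD1 (subsetP sXS z zX) andbT; apply: contraNneq lX => <-.
Qed.

Lemma tree_edges n (S : {set V}) : #|S| = n.+1 -> tree S -> nedges S = n.
Proof.
elim: n S => [|n IH] S cS tS.
  case: tS => _; rewrite cS; lia.
have gt1 : 1 < #|S| by rewrite cS.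
have [l [_ [lS _ _ dl _]]] := leaf_ex tS gt1.
rewrite (nedgesD1 lS) dl (IH (S :\ l)) ?addn1 //; last exact: tree_rem.
by move: cS; rewrite (cardsD1 l S) lS add1n => -[].
Qed.

Lemma no2cycle (S : {set V}) u v : tree S -> u \in S -> v \in S ->
  ed u v -> ed v u -> False.
Proof.
move=> tS uS vS e1 e2.
have uv : u != v by apply/eqP => e; move: e1; rewrite e edirr.
apply: (@no_core #|S| S erefl tS [set u; v] _ u).
- by apply/subsetP => z; rewrite !inE => /orP [] /eqP ->.
- by rewrite !inE eqxx.
move=> z; rewrite !inE => /orP [] /eqP -> ; rewrite /odeg.
  rewrite (bigD1 v) ?inE ?eqxx ?orbT //= e1 e2; lia.
rewrite (bigD1 u) ?inE ?eqxx ?orbT //= e1 e2; lia.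
Qed.

Lemma notri (S : {set V}) u v w : tree S -> u \in S -> v \in S -> w \in S ->
  adj u v -> adj v w -> adj u w -> False.
Proof.
move=> tS uS vS wS a1 a2 a3.
have uv : u != v by apply/eqP => e; move: a1; rewrite e adj_irr.
have vw : v != w by apply/eqP => e; move: a2; rewrite e adj_irr.
have uw : u != w by apply/eqP => e; move: a3; rewrite e adj_irr.
apply: (@no_core #|S| S erefl tS [set u; v; w] _ u).
- by apply/subsetP => z; rewrite !inE => /orP [/orP []|] /eqP ->.
- by rewrite !inE eqxx.
have H : forall a b c, a != b -> a != c -> b != c -> adj a b -> adj a c ->
  a \in [set u; v; w] -> b \in [set u; v; w] -> c \in [set u; v; w] ->
  1 < odeg [set u; v; w] a.
  move=> a b c ab ac bc ab' ac' aX bX cX.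
  rewrite /odeg (bigD1 b) //= (bigD1 c) /=; last by rewrite cX eq_sym.
  move: ab' ac'; rewrite /adj; case: (ed a b); case: (ed b a); case: (ed a c); case: (ed c a) => //= *; lia.
move=> z; rewrite !inE => /orP [/orP []|] /eqP ->.
- by apply: (H u v w) => //; rewrite !inE eqxx ?orbT.
- by apply: (H v u w) => //; rewrite 1?eq_sym // 1?adjC // !inE eqxx ?orbT.
- by apply: (H w u v) => //; rewrite 1?eq_sym // 1?adjC // 1?eq_sym //; rewrite !inE eqxx ?orbT.
Qed.

Lemma adj_leaves (S : {set V}) l1 l2 : tree S -> l1 \in S -> l2 \in S ->
  odeg S l1 = 1 -> odeg S l2 = 1 -> adj l1 l2 -> S \subset [set l1; l2].
Proof.
move=> [cS _] l1S l2S d1 d2 a12.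
have cl : closed (srel S) [set l1; l2].
  have H : forall x y, srel S x y -> x \in [set l1; l2] -> y \in [set l1; l2].
    move=> x y /and3P [xS yS xy]; rewrite !inE => /orP [] /eqP ex; subst x.
      by rewrite (leaf_uniq d1 yS l2S xy a12) eqxx orbT.
    by rewrite (leaf_uniq d2 yS l1S xy) ?eqxx // adjC.
  move=> x y sxy; apply/idP/idP; first exact: H.
  by apply: H; move: sxy; rewrite /srel adjC andbCA.
apply/subsetP => z zS.
by rewrite -(closed_connect cl (cS _ _ l1S zS)) !inE eqxx.
Qed.

Lemma odeg_Nb (S : {set V}) v : (forall a b, ed a b -> ed b a -> False) ->
  odeg S v = #|Nb S v|.
Proof.
move=> H; rewrite /odeg /Nb -sum1_card big_mkcond [RHS]big_mkcond /=.
apply: eq_bigr => w _; rewrite inE /adj.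
case: (w \in S) => //=.
case e1: (ed v w); case e2: (ed w v) => //.
by case: (H _ _ e1 e2).
Qed.

End Graph.

Section Alg.
Variables (V : finType) (ed : rel V) (r : V).
Hypothesis edirr : irreflexive ed.
Hypothesis no2 : forall a b, ed a b -> ed b a -> False.
Hypothesis notri : forall u v w, adj ed u v -> adj ed v w -> adj ed u w -> False.

Implicit Types (S U : {set V}) (g : V -> rat).
Local Notation adj := (adj ed).
Local Notation Nb := (Nb ed).

Definition sgn (a b : V) : rat := if ed a b then 1 else -1.
Definition eps (S : {set V}) v : rat := \prod_(w in Nb S v) sgn v w.
Definition Den (S : {set V}) (g : V -> rat) : rat :=
  \prod_(x in S) \prod_(z in S | ed x z) (g x - g z).
Definition Num (S : {set V}) (g : V -> rat) : rat := \prod_(x in S | x != r) g x.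
Definition term (S : {set V}) (g : V -> rat) : rat := Num S g / Den S g.

Lemma sgn2 a b : sgn a b * sgn a b = 1.
Proof. by rewrite /sgn; case: (ed a b); rewrite ?mulr1 ?mulrNN ?mulr1. Qed.

Lemma sgn_neq0 a b : sgn a b != 0.
Proof. by rewrite /sgn; case: (ed a b); rewrite ?oppr_eq0 oner_eq0. Qed.

Lemma sgnV a b : (sgn a b)^-1 = sgn a b.
Proof. by apply: (mulIf (sgn_neq0 a b)); rewrite sgn2 mulVf ?sgn_neq0. Qed.

Lemma sgnC a b : adj a b -> sgn b a = - sgn a b.
Proof.
rewrite /adj /sgn; case e1: (ed a b); case e2: (ed b a) => //= _;
  try by case: (no2 e1 e2).
all: by rewrite ?opprK.
Qed.

Lemma prod_sgn2 (A : {set V}) (F : V -> V) (G : V -> V) :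
  (\prod_(x in A) sgn (F x) (G x)) * (\prod_(x in A) sgn (F x) (G x)) = 1.
Proof. by rewrite -big_split /= big1 // => x _; rewrite sgn2. Qed.

Lemma eps2 S v : eps S v * eps S v = 1.
Proof. exact: (prod_sgn2 (Nb S v) (fun _ => v) id). Qed.

Lemma eps_neq0 S v : eps S v != 0.
Proof. by apply/eqP => e; move: (eps2 S v); rewrite e mul0r => /eqP; rewrite eq_sym oner_eq0. Qed.

Lemma NbE S v x : (x \in Nb S v) = (x \in S) && adj v x.
Proof. by rewrite inE. Qed.

Lemma Nb_sub S v : Nb S v \subset S :\ v.
Proof.
apply/subsetP => x; rewrite NbE in_setD1 => /andP [xS vx]; rewrite xS andbT.
by apply: contraTneq vx => ->; rewrite (adj_irr edirr).
Qed.

Lemma Den_split S w g : w \in S ->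
  Den S g = Den (S :\ w) g * \prod_(x in Nb S w) (sgn w x * (g w - g x)).
Proof.
move=> wS; rewrite /Den (bigD1 w) //=.
have -> : \prod_(i in S | i != w) \prod_(z in S | ed i z) (g i - g z) =
   \prod_(i in S :\ w) ((if ed i w then g i - g w else 1) *
                        \prod_(z in S :\ w | ed i z) (g i - g z)).
  rewrite [RHS](eq_bigl (fun i => (i \in S) && (i != w))); last first.
    by move=> i; rewrite in_setD1 andbC.
  apply: eq_bigr => i _; rewrite big_mkcond [in RHS]big_mkcond /= (bigD1 w) //=.
  congr (_ * _); first by rewrite wS.
  rewrite [RHS](bigD1 w) //= in_setD1 eqxx /= mul1r.
  by apply: eq_bigr => z zw; rewrite in_setD1 zw.
rewrite big_split /= mulrA mulrC; congr (_ * _).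
rewrite [in RHS]big_mkcond /= [X in X * _]big_mkcond /=.
have -> : \prod_(i in S :\ w) (if ed i w then g i - g w else 1) =
          \prod_(i in S) (if ed i w then g i - g w else 1).
  rewrite [RHS](bigD1 w) //= edirr mul1r; apply: eq_bigl => i; by rewrite in_setD1 andbC.
rewrite [X in _ * X]big_mkcond /= -big_split /=.
apply: eq_bigr => x _; rewrite NbE.
case xS: (x \in S) => //=; rewrite /adj /sgn.
case e1: (ed w x); case e2: (ed x w) => //=; rewrite ?mulr1 ?mul1r //.
- by case: (no2 e1 e2).
- by rewrite mulN1r opprB.
Qed.

Lemma Num_split S v g : v \in S ->
  Num S g = g v ^+ (v != r) * Num (S :\ v) g.
Proof.
move=> vS; rewrite /Num.
case: (eqVneq v r) => [->|vr] /=.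
  rewrite expr0 mul1r; apply: eq_bigl => x; rewrite in_setD1.
  by case: (x \in S); case: (x != r).
rewrite expr1 (bigD1 v) /=; last by rewrite vS vr.
congr (_ * _); apply: eq_bigl => x; rewrite in_setD1.
by case: (x \in S); case: (x != r); case: (x != v).
Qed.

Lemma eq_Num S g g' : {in S, g =1 g'} -> Num S g = Num S g'.
Proof. by move=> H; apply: eq_bigr => x /andP [xS _]; rewrite H. Qed.

Lemma eq_Den S g g' : {in S, g =1 g'} -> Den S g = Den S g'.
Proof.
move=> H; apply: eq_bigr => x xS; apply: eq_bigr => z /andP [zS _].
by rewrite !H.
Qed.

Lemma eq_term S g g' : {in S, g =1 g'} -> term S g = term S g'.
Proof. by move=> H; rewrite /term (eq_Num H) (eq_Den H). Qed.


Definition adm S U : {set {ffun V -> V}} :=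
  [set f : {ffun V -> V} | [&& [forall x in S, forall z in S, (f x == f z) ==> (x == z)],
     [forall x in S, f x \in U] & [forall x in ~: S, f x == x]]].

Lemma admP S U (f : {ffun V -> V}) :
  reflect [/\ {in S &, injective f}, {in S, forall x, f x \in U} &
              forall x, x \notin S -> f x = x] (f \in adm S U).
Proof.
rewrite inE; apply: (iffP and3P) => [[/forall_inP H1 /forall_inP H2 /forall_inP H3]|[H1 H2 H3]].
  split.
  - move=> x z xS zS e; have /forall_inP := H1 x xS.
    by move=> /(_ z zS); rewrite e eqxx => /eqP.
  - exact: H2.
  - by move=> x xS; apply/eqP/H3; rewrite inE.
split; apply/forall_inP.
- move=> x xS; apply/forall_inP => z zS; apply/implyP => /eqP e.
  by rewrite (H1 x z xS zS e).
- exact: H2.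
- by move=> x; rewrite inE => xS; rewrite H3.
Qed.

Lemma adm_surj S U f w : #|S| = #|U| -> f \in adm S U -> w \in U ->
  exists2 x, x \in S & f x = w.
Proof.
move=> cSU /admP [H1 H2 _] wU.
have sub : f @: S \subset U by apply/subsetP => z /imsetP [x xS ->]; exact: H2.
have e : f @: S = U.
  apply/eqP; rewrite eqEcard sub /= (card_in_imset H1) cSU //.
by move: wU; rewrite -e => /imsetP [x xS ->]; exists x.
Qed.

Definition pre S (f : {ffun V -> V}) w := odflt r [pick x in S | f x == w].

Lemma pre_spec S U f w : #|S| = #|U| -> f \in adm S U -> w \in U ->
  pre S f w \in S /\ f (pre S f w) = w.
Proof.
move=> cSU fA wU; rewrite /pre; case: pickP => [x /andP [xS /eqP fx]|H] //=.
have [x xS fx] := adm_surj cSU fA wU.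
by move: (H x); rewrite xS fx eqxx.
Qed.

Lemma pre_eq S U f x : #|S| = #|U| -> f \in adm S U -> x \in S -> pre S f (f x) = x.
Proof.
move=> cSU fA xS; have /admP [H1 H2 _] := fA.
have [pS pf] := pre_spec cSU fA (H2 x xS).
exact: H1.
Qed.

Definition B S U (y : V -> rat) := \sum_(f in adm S U) term S (fun x => y (f x)).

Definition Rs S v := S :\ v :\: Nb S v.

Definition Poly S v g : {poly rat} :=
  (eps S v * term (S :\ v) g) *: ('X^(v != r) * \prod_(x in Rs S v) ('X - (g x)%:P)).

Lemma Poly_horner S v g t : (Poly S v g).[t] =
  eps S v * term (S :\ v) g * (t ^+ (v != r) * \prod_(x in Rs S v) (t - g x)).
Proof.
rewrite /Poly hornerZ hornerM hornerXn horner_prod.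
by under eq_bigr do rewrite hornerXsubC.
Qed.

Lemma eq_Poly S v g g' : {in S :\ v, g =1 g'} -> Poly S v g = Poly S v g'.
Proof.
move=> H; rewrite /Poly (eq_term H); congr (_ *: (_ * _)).
apply: eq_bigr => x; rewrite /Rs in_setD => /andP [_ xS]; by rewrite H.
Qed.

Lemma card_Rs S v : v \in S -> #|Rs S v| = (#|S|.-1 - #|Nb S v|)%N.
Proof.
move=> vS; rewrite /Rs cardsD (setIidPr (Nb_sub S v)).
by rewrite (cardsD1 v S) vS.
Qed.

Lemma monic_M S v g : ('X^(v != r) * \prod_(x in Rs S v) ('X - (g x)%:P)) \is monic.
Proof. by rewrite monicMl ?monicXn // monic_prod_XsubC. Qed.

Lemma size_M S v g :
  size ('X^(v != r) * \prod_(x in Rs S v) ('X - (g x)%:P)) = ((v != r) + #|Rs S v|).+1.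
Proof.
rewrite size_monicM ?monicXn //; last first.
  by apply: monic_neq0; rewrite monic_prod_XsubC.
rewrite size_polyXn -big_enum size_prod_XsubC /= -cardE.
by rewrite addnS.
Qed.

Lemma Poly_size S v g : (size (Poly S v g) <= ((v != r) + #|Rs S v|).+1)%N.
Proof. by rewrite /Poly -(size_M S v g) size_scale_leq. Qed.

Lemma Poly_coef S v g : v \in S -> ((v != r) <= #|Nb S v|)%N ->
  (Poly S v g)`_(#|S|.-1) =
    if #|Nb S v| == (v != r) then eps S v * term (S :\ v) g else 0.
Proof.
move=> vS le; rewrite /Poly coefZ.
have cS : (#|Nb S v| < #|S|)%N.
  by rewrite (cardsD1 v S) vS add1n ltnS; apply: subset_leq_card (Nb_sub S v).
have [e|ne] := eqVneq #|Nb S v| (v != r : nat).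
  have -> : #|S|.-1 = (size ('X^(v != r) * \prod_(x in Rs S v) ('X - (g x)%:P))).-1.
    rewrite size_M card_Rs //= e; move: cS; rewrite e; generalize #|S| (nat_of_bool (v != r)); lia.
  by move: (monic_M S v g) => /monicP; rewrite /lead_coef => ->; rewrite mulr1.
rewrite nth_default ?mulr0 // size_M card_Rs //.
have : ((v != r) < #|Nb S v|)%N by rewrite ltn_neqAle le andbT eq_sym.
move: cS; generalize #|S| #|Nb S v| (nat_of_bool (v != r)); lia.
Qed.


Lemma Den_neq0 S g : {in S &, injective g} -> Den S g != 0.
Proof.
move=> inj; rewrite /Den; apply/prodf_neq0 => x xS; apply/prodf_neq0 => z /andP [zS exz].
rewrite subr_eq0; apply: contraTneq exz => /(inj _ _ xS zS) ->.
by rewrite edirr.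
Qed.

Lemma prod_sgnV (A : {set V}) (F G : V -> V) :
  (\prod_(x in A) sgn (F x) (G x))^-1 = \prod_(x in A) sgn (F x) (G x).
Proof.
have H := prod_sgn2 A F G.
have nz : \prod_(x in A) sgn (F x) (G x) != 0.
  by apply/eqP => e; move: H; rewrite e mul0r => /eqP; rewrite eq_sym oner_eq0.
by apply: (mulIf nz); rewrite mulVf // H.
Qed.

Lemma epsV S v : (eps S v)^-1 = eps S v.
Proof. exact: (prod_sgnV (Nb S v) (fun _ => v) id). Qed.

Lemma eval_id S U y f w0 : #|S| = #|U| -> {in U &, injective y} -> f \in adm S U ->
  w0 \in U ->
  (Poly S (pre S f w0) (fun x => y (f x))).[y w0] =
    term S (fun x => y (f x)) * \prod_(u in U :\ w0) (y w0 - y u).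
Proof.
move=> cSU yinj fA w0U.
have [vS fv] := pre_spec cSU fA w0U.
have /admP [finj finU fout] := fA.
set v := pre S f w0 in vS fv *; set g := (fun x => y (f x)).
have gv : g v = y w0 by rewrite /g fv.
have ginj : {in S &, injective g}.
  by move=> a b aS bS /yinj e; apply: finj => //; apply: e; apply: finU.
have E1 : \prod_(u in U :\ w0) (y w0 - y u) = \prod_(x in S :\ v) (g v - g x).
  have -> : U :\ w0 = f @: (S :\ v).
    apply/setP => u; rewrite in_setD1; apply/andP/imsetP.
      move=> [uw uU]; have [x xS fx] := adm_surj cSU fA uU.
      exists x => //; rewrite in_setD1 xS andbT; apply: contraNneq uw => e.
      by rewrite -fx e fv.
    move=> [x]; rewrite in_setD1 => /andP [xv xS] ->; split; last exact: finU.
    by apply: contraNneq xv => e; apply/eqP; apply: finj => //; rewrite e fv.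
  rewrite big_imset /=; last first.
    by move=> a b; rewrite !in_setD1 => /andP [_ aS] /andP [_ bS]; apply: finj.
  by apply: eq_bigr => x _; rewrite gv.
rewrite E1 (big_setID (Nb S v)) /= (setIidPr (Nb_sub S v)).
rewrite Poly_horner /term (Num_split g vS) (Den_split g vS) big_split /= -/(eps S v).
set e := eps S v; set D := Den (S :\ v) g; set N := Num (S :\ v) g.
set P := \prod_(i in Nb S v) (g v - g i).
set R := \prod_(i in Rs S v) (g v - g i).
rewrite -gv -/R; set aa := g v ^+ _.
have Dn : D != 0.
  by apply: Den_neq0 => a b; rewrite !in_setD1 => /andP [_ aS] /andP [_ bS]; apply: ginj.
have Pn : P != 0.
  apply/prodf_neq0 => x; rewrite NbE => /andP [xS vx]; rewrite subr_eq0.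
  apply: contraTneq vx => /(ginj _ _ vS xS) <-; by rewrite (adj_irr edirr).
have en : e != 0 by exact: eps_neq0.
have einv : e = e^-1 by rewrite epsV.
rewrite {1}einv; field.
by rewrite Dn en Pn.
Qed.


Lemma Nb_D1 S v w : Nb (S :\ v) w = Nb S w :\ v.
Proof. by apply/setP => x; rewrite !inE; case: (x == v); case: (x \in S). Qed.

Lemma Phi_form S v w g : v \in S -> w \in S -> adj v w -> g v = g w ->
  (forall x, x \in S -> x != v -> x != w -> g x != g w) ->
  (Poly S v g).[g v] = sgn v w *
    (\prod_(x in Nb S v :\ w) sgn v x * \prod_(x in Nb S w :\ v) sgn w x) *
    (Num S g * \prod_(x in S :\: (Nb S v :|: Nb S w)) (g v - g x) /
     Den (S :\ v :\ w) g).
Proof.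
move=> vS wS vw gvw ginj.
have wv : w != v by apply: contraTneq vw => ->; rewrite (adj_irr edirr).
have wSv : w \in S :\ v by rewrite in_setD1 wv.
rewrite Poly_horner /eps (bigD1 w) /=; last by rewrite NbE wS.
have -> : \prod_(i in Nb S v | i != w) sgn v i = \prod_(x in Nb S v :\ w) sgn v x.
  by apply: eq_bigl => x; rewrite in_setD1 andbC.
rewrite /term (Den_split g wSv) Nb_D1 big_split /=.
rewrite (@big_setID _ _ _ _ (Rs S v) (Nb S w :\ v)) /=.
have -> : Rs S v :&: (Nb S w :\ v) = Nb S w :\ v.
  apply/setIidPr/subsetP => x; rewrite /Rs !inE => /andP [xv /andP [xS wx]].
  rewrite xv xS /= andbT; apply/negP => vx.
  by apply: (notri vx (_ : adj x w) vw); rewrite adjC.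
have -> : Rs S v :\: (Nb S w :\ v) = S :\: (Nb S v :|: Nb S w).
  apply/setP => x; rewrite /Rs !inE.
  case: (eqVneq x v) => [->|xv] /=.
    by rewrite (adj_irr edirr) (adjC _ w v) vw vS /=.
  by case: (x \in S); case: (adj v x); case: (adj w x).
have E : \prod_(i in Nb S w :\ v) (g v - g i) = \prod_(i in Nb S w :\ v) (g w - g i).
  by apply: eq_bigr => x _; rewrite gvw.
rewrite E.
set Q := \prod_(i in Nb S w :\ v) (g w - g i).
set Sw := \prod_(i in Nb S w :\ v) sgn w i.
set Sv := \prod_(x in Nb S v :\ w) sgn v x.
set T := \prod_(i in S :\: (Nb S v :|: Nb S w)) (g v - g i).
set D := Den (S :\ v :\ w) g.
have Qn : Q != 0.
  apply/prodf_neq0 => x; rewrite !inE => /andP [xv /andP [xS wx]].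
  rewrite subr_eq0 eq_sym; apply: ginj => //.
  by apply: contraTneq wx => ->; rewrite (adj_irr edirr).
have Swn : Sw != 0.
  by apply/eqP => e; move: (prod_sgn2 (Nb S w :\ v) (fun _ => w) id); rewrite -/Sw e mul0r => /eqP; rewrite eq_sym oner_eq0.
have Swi : Sw = Sw^-1 by rewrite prod_sgnV.
rewrite [in RHS](Num_split g vS).
set N' := Num (S :\ v) g; set aa := g v ^+ _.
have [Dz|Dn] := eqVneq D 0.
  by rewrite Dz ?mul0r ?invr0 ?mulr0 ?mul0r.
rewrite {2}Swi; field.
by rewrite Dn Swn Qn.
Qed.

Lemma Phi_anti S v w g : v \in S -> w \in S -> adj v w -> g v = g w ->
  (forall x, x \in S -> x != v -> x != w -> g x != g w) ->
  (Poly S v g).[g v] = - (Poly S w g).[g w].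
Proof.
move=> vS wS vw gvw ginj.
rewrite (Phi_form vS wS vw gvw ginj) (Phi_form wS vS _ (esym gvw)); last first.
- by move=> x xS xw xv; rewrite gvw; apply: ginj.
- by rewrite adjC.
rewrite (sgnC vw) setUC gvw.
have -> : S :\ w :\ v = S :\ v :\ w by rewrite !setDDl setUC.
ring.
Qed.


Definition Ptot S U (y : V -> rat) w0 : {poly rat} :=
  \sum_(f in adm S U) Poly S (pre S f w0) (fun x => y (f x)).

Definition swap (a b x : V) := if x == a then b else if x == b then a else x.

Lemma swapK a b : involutive (swap a b).
Proof.
move=> x; rewrite /swap.
case: (eqVneq x a) => [->|xa]; first by rewrite eqxx; case: (eqVneq b a) => [->|].
case: (eqVneq x b) => [->|xb]; first by rewrite eqxx.
by rewrite (negbTE xa) (negbTE xb).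
Qed.

Lemma swap_eq a b x z : (swap a b x == z) = (x == swap a b z).
Proof.
apply/eqP/eqP => [<-|->]; by rewrite swapK.
Qed.

Lemma swapE1 a b : swap a b a = b.
Proof. by rewrite /swap eqxx. Qed.

Lemma swapE2 a b : swap a b b = a.
Proof. by rewrite /swap eqxx; case: eqP. Qed.

Lemma P_root S U y w0 u : #|S| = #|U| -> {in U &, injective y} -> w0 \in U ->
  u \in U -> u != w0 -> (Ptot S U y w0).[y u] = 0.
Proof.
move=> cSU yinj w0U uU uw0.
rewrite /Ptot horner_sum.
set F := fun f : {ffun V -> V} => (Poly S (pre S f w0) (fun x => y (f x))).[y u].
pose cnd (f : {ffun V -> V}) := adj (pre S f w0) (pre S f u).
pose sig (f : {ffun V -> V}) : {ffun V -> V} :=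
  [ffun x => if (x \in S) && cnd f then swap w0 u (f x) else f x].
have pre_sig : forall f, (pre S (sig f) w0 = if cnd f then pre S f u else pre S f w0) /\
                         (pre S (sig f) u = if cnd f then pre S f w0 else pre S f u).
  move=> f; rewrite /pre; case: (boolP (cnd f)) => cf; split; congr odflt; apply: eq_pick => x /=;
    rewrite ffunE ?cf ?(negbTE cf) ?andbT ?andbF //; case: (x \in S) => //=;
    by rewrite swap_eq ?swapE1 ?swapE2.
have cnd_sig : forall f, cnd (sig f) = cnd f.
  move=> f; have [H1 H2] := pre_sig f; rewrite /cnd H1 H2.
  by case: (cnd f) => //; exact: adjC.
have sigK : involutive sig.
  move=> f; apply/ffunP => x; rewrite !ffunE cnd_sig.
  by case: ((x \in S) && cnd f) => //; rewrite swapK.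
have swapU : forall x, x \in U -> swap w0 u x \in U.
  by move=> x xU; rewrite /swap; case: (x == w0) => //; case: (x == u).
have sig_adm : forall f, f \in adm S U -> sig f \in adm S U.
  move=> f /admP [H1 H2 H3]; apply/admP; split.
  - move=> a b aS bS; rewrite !ffunE aS bS /=; case: (cnd f) => /=; last exact: H1.
    by move=> /(can_inj (swapK w0 u)); apply: H1.
  - by move=> x xS; rewrite ffunE xS /=; case: (cnd f); [apply: swapU; apply: H2 | apply: H2].
  - by move=> x xS; rewrite ffunE (negbTE xS) /= H3.
have sig_adm' : forall f, (sig f \in adm S U) = (f \in adm S U).
  move=> f; apply/idP/idP => [H|]; last exact: sig_adm.
  by rewrite -(sigK f); apply: sig_adm.
have Fsig : forall f, f \in adm S U -> F (sig f) = - F f.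
  move=> f fA; have /admP [finj finU fout] := fA.
  have [vS fv] := pre_spec cSU fA w0U; have [wS fw] := pre_spec cSU fA uU.
  set v := pre S f w0 in vS fv *; set w := pre S f u in wS fw *.
  have vw : v != w by apply: contra_neq uw0 => e; rewrite -fw -e fv.
  have wv : w != v by rewrite eq_sym.
  have [H1 H2] := pre_sig f.
  case: (boolP (cnd f)) => cf; last first.
    have -> : sig f = f by apply/ffunP => x; rewrite ffunE (negbTE cf) andbF.
    suff -> : F f = 0 by rewrite oppr0.
    rewrite /F Poly_horner -/v (bigD1 w) /=; last first.
      by rewrite /Rs !inE eq_sym vw wS /= andbT; move: cf; rewrite /cnd -/v -/w.
    by rewrite fw subrr !mul0r !mulr0.
  have adjvw : adj v w by exact: cf.
  pose gh := fun x => if x == v then y u else y (f x).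
  have E1 : F f = (Poly S v gh).[gh v].
    rewrite /F -/v /gh eqxx; congr horner; apply: eq_Poly => x.
    by rewrite in_setD1 => /andP [/negbTE -> _].
  have E2 : F (sig f) = (Poly S w gh).[gh w].
    rewrite /F H1 cf -/w /gh (negbTE wv) fw.
    congr horner; apply: eq_Poly => x; rewrite in_setD1 => /andP [xw xS].
    rewrite ffunE xS cf /=; case: (eqVneq x v) => [->|xv]; first by rewrite fv swapE1.
    rewrite /swap; have -> : (f x == w0) = false.
      by apply/negbTE; apply: contra_neq xv => e; apply: finj => //; rewrite e fv.
    have -> // : (f x == u) = false.
    by apply/negbTE; apply: contra_neq xw => e; apply: finj => //; rewrite e fw.
  rewrite E1 E2 (Phi_anti vS wS adjvw) ?opprK //.
    by rewrite /gh eqxx (negbTE wv) fw.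
  move=> x xS xv xw; rewrite /gh (negbTE xv) (negbTE wv) fw.
  apply: contra_neq xw => /yinj e; apply: finj => //.
  by rewrite fw; apply: e => //; apply: finU.
have E : \sum_(f in adm S U) F f = \sum_(f in adm S U) F (sig f).
  rewrite (reindex_inj (can_inj sigK)) /=.
  by apply: eq_bigl => f; rewrite sig_adm'.
have E' : \sum_(f in adm S U) F (sig f) = - \sum_(f in adm S U) F f.
  by rewrite -sumrN; apply: eq_bigr => f fA; rewrite Fsig.
have H : \sum_(f in adm S U) F f = - \sum_(f in adm S U) F f by rewrite {1}E E'.
move: H; set X := \sum_(f in adm S U) F f => H.
have : X *+ 2 == 0 by rewrite mulr2n {1}H addNr.
by rewrite mulrn_eq0 /= => /eqP.
Qed.


Local Notation tree := (tree ed).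

Lemma deg_ok S v : tree S -> r \in S -> v \in S -> ((v != r) <= #|Nb S v|)%N.
Proof.
move=> tS rS vS; case: (leqP #|S| 1) => [le1|gt1].
  have -> : v = r.
    apply/eqP/negPn/negP => vr; move: le1; rewrite leqNgt => /negP; apply.
    by apply/card_gt1P; exists v, r.
  by rewrite eqxx.
rewrite -(@odeg_Nb _ ed S v no2); exact: leq_trans (leq_b1 _) (odeg_pos tS gt1 vS).
Qed.

Lemma B_from_P S U y w0 : tree S -> r \in S -> #|S| = #|U| ->
  {in U &, injective y} -> w0 \in U ->
  B S U y = (Ptot S U y w0)`_(#|S|.-1).
Proof.
move=> tS rS cSU yinj w0U.
set P := Ptot S U y w0.
set rs := [seq y u | u <- enum (U :\ w0)].
have Pi : \prod_(z <- rs) ('X - z%:P) = \prod_(u in U :\ w0) ('X - (y u)%:P).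
  by rewrite big_map big_enum.
have roots : all (root P) rs.
  apply/allP => z /mapP [u]; rewrite mem_enum in_setD1 => /andP [uw0 uU] ->.
  by rewrite /root P_root.
have urs : uniq_roots rs.
  rewrite uniq_rootsE map_inj_in_uniq ?enum_uniq // => a b.
  by rewrite !mem_enum !in_setD1 => /andP [_ aU] /andP [_ bU]; apply: yinj.
have [q Pq] := uniq_roots_prod_XsubC roots urs.
rewrite Pi in Pq.
set Pm := \prod_(u in U :\ w0) ('X - (y u)%:P) in Pq.
have mPm : Pm \is monic by rewrite monic_prod_XsubC.
have sPm : size Pm = #|S|.
  rewrite /Pm -big_enum size_prod_XsubC -cardE cSU (cardsD1 w0 U) w0U.
  by rewrite add1n.
have sP : (size P <= #|S|)%N.
  apply: leq_trans (size_sum _ _ _) _; apply/bigmax_leqP => f fA.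
  have [vS _] := pre_spec cSU fA w0U.
  apply: leq_trans (Poly_size _ _ _) _.
  rewrite card_Rs //; have := deg_ok tS rS vS.
  have : (#|Nb S (pre S f w0)| < #|S|)%N.
    by rewrite (cardsD1 (pre S f w0) S) vS add1n ltnS; apply: subset_leq_card (Nb_sub _ _).
  generalize #|Nb S (pre S f w0)| #|S| (nat_of_bool (pre S f w0 != r)); lia.
have sq : (size q <= 1)%N.
  have [->|qn] := eqVneq q 0; first by rewrite size_poly0.
  move: sP; rewrite Pq size_mul //; last exact: monic_neq0.
  move: sPm; set sm := size _ => sPm; rewrite sPm.
  have : (0 < #|S|)%N by apply/card_gt0P; exists r.
  rewrite -subn1; move: (size q) #|S| => a b; lia.
have qc := size1_polyC sq.
have Pc : P`_(#|S|.-1) = q`_0.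
  rewrite Pq {1}qc coefCM.
  have : lead_coef Pm = 1 by apply/monicP.
  by rewrite /lead_coef sPm => ->; rewrite mulr1.
rewrite Pc.
have Pn : \prod_(u in U :\ w0) (y w0 - y u) != 0.
  apply/prodf_neq0 => u; rewrite in_setD1 => /andP [uw0 uU].
  by rewrite subr_eq0; apply: contra_neq uw0 => /yinj ->.
apply: (mulIf Pn).
have : P.[y w0] = q`_0 * \prod_(u in U :\ w0) (y w0 - y u).
  rewrite {1}Pq {1}qc hornerM hornerC /Pm horner_prod.
  by under eq_bigr do rewrite hornerXsubC.
rewrite /P /Ptot horner_sum => <-; rewrite /B mulr_suml.
apply: eq_bigr => f fA; by rewrite (eval_id cSU yinj fA w0U).
Qed.


Definition upd (f : {ffun V -> V}) v w : {ffun V -> V} :=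
  [ffun x => if x == v then w else f x].

Lemma adm_split S U y v w0 : v \in S -> w0 \in U ->
  \sum_(f in adm S U | f v == w0) term (S :\ v) (fun x => y (f x)) =
  B (S :\ v) (U :\ w0) y.
Proof.
move=> vS w0U; rewrite /B.
have hinj : {in adm (S :\ v) (U :\ w0) &, injective (fun f => upd f v w0)}.
  move=> f1 f2 /admP [_ _ o1] /admP [_ _ o2] e; apply/ffunP => x.
  case: (eqVneq x v) => [->|xv].
    by rewrite o1 ?o2 // in_setD1 eqxx.
  by have := congr1 (fun g : {ffun V -> V} => g x) e; rewrite !ffunE (negbTE xv).
transitivity (\sum_(f in adm (S :\ v) (U :\ w0)) term (S :\ v) (fun x => y (upd f v w0 x))); last first.
  apply: eq_bigr => f _; apply: eq_term => x; rewrite in_setD1 => /andP [xv _].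
  by rewrite ffunE (negbTE xv).
rewrite -(big_imset (fun f : {ffun V -> V} => term (S :\ v) (fun x => y (f x))) hinj) /=.
apply: eq_bigl => f; apply/idP/idP.
  move=> /andP [fA /eqP fv]; have /admP [finj finU fout] := fA.
  apply/imsetP; exists (upd f v v).
    apply/admP; split.
    - move=> a b; rewrite !in_setD1 !ffunE => /andP [av aS] /andP [bv bS].
      by rewrite (negbTE av) (negbTE bv); apply: finj.
    - move=> x; rewrite in_setD1 ffunE => /andP [xv xS]; rewrite (negbTE xv) in_setD1 finU // andbT.
      by apply: contra_neq xv => e; apply: finj => //; rewrite e fv.
    - move=> x; rewrite in_setD1 negb_and negbK ffunE.
      by case: (eqVneq x v) => //= xv xS; apply: fout.
  apply/ffunP => x; rewrite !ffunE; case: (eqVneq x v) => [->|] //.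
move=> /imsetP [g /admP [ginj ginU gout] ->].
have gv : g v = v by apply: gout; rewrite in_setD1 eqxx.
rewrite ffunE eqxx eqxx andbT; apply/admP; split.
- move=> a b aS bS; rewrite !ffunE.
  case: (eqVneq a v) => [->|av]; case: (eqVneq b v) => [->|bv] //.
  + move=> e; have := ginU b; rewrite in_setD1 bv bS => /(_ isT).
    by rewrite -e in_setD1 eqxx.
  + move=> e; have := ginU a; rewrite in_setD1 av aS => /(_ isT).
    by rewrite e in_setD1 eqxx.
  + by apply: ginj; rewrite in_setD1 ?av ?bv.
- move=> x xS; rewrite ffunE; case: (eqVneq x v) => // xv.
  have := ginU x; rewrite !in_setD1 xv xS => /(_ isT) /andP [].
  by [].
- move=> x xS; rewrite ffunE; case: (eqVneq x v) => [e|xv]; first by rewrite e vS in xS.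
  by apply: gout; rewrite in_setD1 negb_and xS orbT.
Qed.

Lemma coef_decomp S U y w0 : tree S -> r \in S -> #|S| = #|U| -> w0 \in U ->
  (Ptot S U y w0)`_(#|S|.-1) =
  \sum_(v in S | #|Nb S v| == (v != r)) eps S v * B (S :\ v) (U :\ w0) y.
Proof.
move=> tS rS cSU w0U; rewrite /Ptot coef_sum.
rewrite (partition_big (fun f => pre S f w0) (mem S)) /=; last first.
  by move=> f fA; have [] := pre_spec cSU fA w0U.
rewrite [RHS]big_mkcondr /=; apply: eq_bigr => v vS.
have E : forall f, f \in adm S U -> (pre S f w0 == v) = (f v == w0).
  move=> f fA; apply/eqP/eqP => [<-|<-]; first by have [] := pre_spec cSU fA w0U.
  exact: (pre_eq cSU fA vS).
rewrite (eq_bigl (fun f => (f \in adm S U) && (f v == w0))); last first.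
  by move=> f; case fA: (f \in adm S U) => //=; rewrite E.
rewrite (eq_bigr (fun f : {ffun V -> V} => if #|Nb S v| == (v != r) then
          eps S v * term (S :\ v) (fun x => y (f x)) else 0)); last first.
  move=> f /andP [fA /eqP fv].
  have pv : pre S f w0 = v by rewrite -fv (pre_eq cSU fA vS).
  by rewrite pv Poly_coef // deg_ok.
case: ifP => _; last by rewrite big1.
by rewrite -mulr_sumr adm_split.
Qed.

Lemma B_empty U y : #|U| = 0%N -> B set0 U y = 1.
Proof.
move=> /cards0_eq ->; rewrite /B.
have -> : adm set0 set0 = [set [ffun x => x]].
  apply/setP => f; rewrite !inE; apply/idP/eqP.
    move=> /and3P [_ _ /forall_inP H]; apply/ffunP => x; rewrite ffunE.
    by apply/eqP/H; rewrite inE in_set0.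
  move=> ->; apply/and3P; split; apply/forall_inP => x; rewrite ?in_set0 //.
  by rewrite ffunE.
rewrite big_set1 /term /Num /Den !big_pred0 ?invr1 ?mulr1 // => x; by rewrite in_set0.
Qed.


Definition epsz S v : int := \prod_(w in Nb S v) (if ed v w then 1 else -1).

Lemma eps_z S v : eps S v = (epsz S v)%:~R.
Proof.
rewrite /eps /epsz rmorph_prod; apply: eq_bigr => w _; rewrite /sgn.
by case: (ed v w); rewrite ?rmorphN ?rmorph1.
Qed.

Lemma epsz_neq0 S v : epsz S v != 0.
Proof.
have := eps_neq0 S v; rewrite eps_z; apply: contra_neq => ->; by rewrite rmorph0.
Qed.

Fixpoint cf (n : nat) S : int :=
  if n is n'.+1 then
    \sum_(v in S | #|Nb S v| == (v != r)) epsz S v * cf n' (S :\ v)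
  else 1.

Definition cS S := cf #|S| S.

Lemma cS0 : cS set0 = 1.
Proof. by rewrite /cS cards0. Qed.

Lemma cS_rec S n : #|S| = n.+1 ->
  cS S = \sum_(v in S | #|Nb S v| == (v != r)) epsz S v * cS (S :\ v).
Proof.
move=> cS'; rewrite /cS cS' /=; apply: eq_bigr => v /andP [vS _].
by move: cS'; rewrite (cardsD1 v S) vS add1n => -[->].
Qed.

Lemma cond_rem S v : tree S -> r \in S -> v \in S -> (1 < #|S|)%N ->
  #|Nb S v| == (v != r) -> [/\ v != r, odeg ed S v = 1%N & tree (S :\ v)].
Proof.
move=> tS rS vS gt1 cv.
have od := odeg_pos tS gt1 vS; rewrite (@odeg_Nb _ ed S v no2) in od.
have vr : v != r by move: cv od; case: (v != r) => //= /eqP ->.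
move: cv; rewrite vr /= => /eqP e.
have od1 : odeg ed S v = 1%N by rewrite (@odeg_Nb _ ed S v no2).
by split => //; apply: tree_rem.
Qed.

Lemma main_ind n S U y : #|S| = n -> (S = set0 \/ (tree S /\ r \in S)) ->
  #|U| = #|S| -> {in U &, injective y} -> B S U y = (cS S)%:~R.
Proof.
elim: n S U y => [|n IH] S U y cSn hS cU yinj.
  have S0 := cards0_eq cSn; subst S.
  by rewrite B_empty ?cU ?cards0 // cS0.
have [S0|[tS rS]] := hS; first by rewrite S0 cards0 in cSn.
have : (0 < #|U|)%N by rewrite cU cSn.
move=> /card_gt0P [w0 w0U].
rewrite (B_from_P tS rS (esym cU) yinj w0U) (coef_decomp y tS rS (esym cU) w0U).
rewrite (cS_rec cSn) rmorph_sum; apply: eq_bigr => v /andP [vS cv].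
rewrite rmorphM /= -eps_z.
have cSv : #|S :\ v| = n by move: cSn; rewrite (cardsD1 v S) vS add1n => -[].
rewrite (IH (S :\ v) (U :\ w0) y cSv) //.
- case: n IH cSn cSv => [|n] IH cSn cSv; first by left; apply: cards0_eq.
  have gt1 : (1 < #|S|)%N by rewrite cSn.
  have [vr _ tSv] := cond_rem tS rS vS gt1 cv.
  by right; split => //; rewrite in_setD1 eq_sym vr.
- by rewrite cSv; move: cU; rewrite cSn (cardsD1 w0 U) w0U add1n => -[].
- by move=> a b; rewrite !in_setD1 => /andP [_ aU] /andP [_ bU]; apply: yinj.
Qed.


Lemma sq_pos (a : int) : a != 0 -> 0 < a * a.
Proof.
case: (ltrgtP a 0) => [an|ap|->]; last by [].
idtac.
  by rewrite nmulr_rgt0.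
by rewrite mulr_gt0.
Qed.

Lemma sign_ind n S : #|S| = n -> tree S -> r \in S ->
  cS S != 0 /\ (forall v, v \in S -> #|Nb S v| == (v != r) ->
                  0 < epsz S v * cS (S :\ v) * cS S).
Proof.
elim: n S => [|n IH] S cSn tS rS.
  by move: (cards0_eq cSn) rS => ->; rewrite in_set0.
pose a v := epsz S v * cS (S :\ v).
have cSv : forall v, v \in S -> #|S :\ v| = n.
  by move=> v vS; move: cSn; rewrite (cardsD1 v S) vS add1n => -[].
have cnz : forall v, v \in S -> #|Nb S v| == (v != r) -> cS (S :\ v) != 0.
  move=> v vS cv; case: n IH cSn cSv => [|n] IH cSn cSv.
    by rewrite (cards0_eq (cSv v vS)) cS0.
  have gt1 : (1 < #|S|)%N by rewrite cSn.
  have [vr _ tSv] := cond_rem tS rS vS gt1 cv.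
  by have [] := IH _ (cSv v vS) tSv; rewrite // in_setD1 eq_sym vr.
have pair : forall l1 l2, l1 \in S -> #|Nb S l1| == (l1 != r) ->
                          l2 \in S -> #|Nb S l2| == (l2 != r) -> 0 < a l1 * a l2.
  move=> l1 l2 l1S c1 l2S c2.
  case: (eqVneq l1 l2) => [<-|l12].
    by apply: sq_pos; rewrite /a mulf_neq0 ?epsz_neq0 ?cnz.
  have gt1 : (1 < #|S|)%N by apply/card_gt1P; exists l1, l2.
  have [l1r od1 t1] := cond_rem tS rS l1S gt1 c1.
  have [l2r od2 t2] := cond_rem tS rS l2S gt1 c2.
  have na : ~~ adj l1 l2.
    apply/negP => ad; have := subsetP (adj_leaves tS l1S l2S od1 od2 ad) r rS.
    by rewrite !inE => /orP [] /eqP e; [move: l1r | move: l2r]; rewrite e eqxx.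
  have NbE1 : Nb (S :\ l1) l2 = Nb S l2.
    apply/setP => x; rewrite !inE; case: (eqVneq x l1) => [->|] //=.
    by rewrite adjC (negbTE na) andbF.
  have NbE2 : Nb (S :\ l2) l1 = Nb S l1.
    apply/setP => x; rewrite !inE; case: (eqVneq x l2) => [->|] //=.
    by rewrite (negbTE na) andbF.
  have rS1 : r \in S :\ l1 by rewrite in_setD1 eq_sym l1r.
  have rS2 : r \in S :\ l2 by rewrite in_setD1 eq_sym l2r.
  have [_ H1] := IH _ (cSv l1 l1S) t1 rS1.
  have [_ H2] := IH _ (cSv l2 l2S) t2 rS2.
  have l2S1 : l2 \in S :\ l1 by rewrite in_setD1 eq_sym l12.
  have l1S2 : l1 \in S :\ l2 by rewrite in_setD1 l12.
  have c2' : #|Nb (S :\ l1) l2| == (l2 != r) by rewrite NbE1.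
  have c1' : #|Nb (S :\ l2) l1| == (l1 != r) by rewrite NbE2.
  have h1 := H1 l2 l2S1 c2'.
  have h2 := H2 l1 l1S2 c1'.
  rewrite /epsz NbE1 -/(epsz S l2) in h1.
  rewrite /epsz NbE2 -/(epsz S l1) in h2.
  have ecom : S :\ l1 :\ l2 = S :\ l2 :\ l1.
    by apply/setP => x; rewrite !in_setD1; case: (x == l1); case: (x == l2).
  rewrite ecom in h1.
  set d := cS (S :\ l2 :\ l1) in h1 h2.
  have dn : d != 0 by apply: contraTneq h1 => ->; rewrite mulr0 mul0r ltxx.
  have := mulr_gt0 h1 h2.
  have -> : epsz S l2 * d * cS (S :\ l1) * (epsz S l1 * d * cS (S :\ l2)) =
            a l1 * a l2 * (d * d) by rewrite /a; ring.
  by rewrite pmulr_lgt0 ?sq_pos.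
have [l0 l0S c0] : exists2 l0, l0 \in S & #|Nb S l0| == (l0 != r).
  case: n IH cSn cSv cnz => [|n] IH cSn cSv cnz.
    exists r => //; rewrite eqxx /=.
    have := subset_leq_card (Nb_sub S r); rewrite (cSv r rS) leqn0 => /eqP ->.
    by [].
  have gt1 : (1 < #|S|)%N by rewrite cSn.
  have [l1 [l2 [l1S l2S l12 od1 od2]]] := leaf_ex tS gt1.
  case: (eqVneq l1 r) => [e1|l1r].
    exists l2 => //; have l2r : l2 != r by rewrite -e1 eq_sym.
    by rewrite l2r -(@odeg_Nb _ ed S l2 no2) od2.
  by exists l1 => //; rewrite l1r -(@odeg_Nb _ ed S l1 no2) od1.
have pos : forall l, l \in S -> #|Nb S l| == (l != r) -> 0 < a l * cS S.
  move=> l lS cl; rewrite (cS_rec cSn) mulr_sumr (bigD1 l) /=; last by rewrite lS cl.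
  apply: (lt_le_trans (pair l l lS cl lS cl)); rewrite lerDl sumr_ge0 // => v.
  by move=> /andP [/andP [vS cv] _]; apply: ltW; apply: pair.
split; last exact: pos.
by apply/eqP => e; move: (pos l0 l0S c0); rewrite e mulr0 ltxx.
Qed.

End Alg.





Section Top.
Variables (k : nat) (E : seq ('I_k * 'I_k)) (r : 'I_k).
Hypothesis tE : is_tree E.

Lemma k0 : (0 < k)%N.
Proof. exact: leq_ltn_trans (leq0n r) (ltn_ord r). Qed.

Let ed : rel 'I_k := fun u v => (u, v) \in E.

Lemma edirr' : irreflexive ed.
Proof.
move=> u; apply/negP => uu; case: tE => _ /allP H _.
by move: (H _ uu) => /=; rewrite eqxx.
Qed.

Lemma nedgesT : nedges ed setT = #|[pred p | p \in E]|.
Proof.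
rewrite /nedges -sum1_card pair_big_dep /= big_mkcond [RHS]big_mkcond /=.
apply: eq_bigr => -[a b] _ /=; rewrite !in_setT /= /ed.
by case: ((a, b) \in E).
Qed.

Lemma treeT : tree ed setT.
Proof.
case: tE => sE _ cE; split.
  move=> u v _ _; rewrite (eq_connect (e' := und_adj E)) //.
  by move=> a b; rewrite /srel !in_setT.
rewrite nedgesT cardsT card_ord.
apply: leq_ltn_trans (card_size _) _; rewrite sE.
have := k0; lia.
Qed.

Lemma uniqE : uniq E.
Proof.
apply/card_uniqP.
have : nedges ed setT = k.-1.
  apply: (tree_edges edirr' _ treeT).
  by rewrite cardsT card_ord prednK // k0.
rewrite nedgesT => ->; by case: tE.
Qed.


Lemma bracketE (x : 'I_k -> rat) : bracket E r x = B ed r setT setT x.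
Proof.
rewrite /bracket /B.
pose h := fun s : {perm 'I_k} => [ffun v => s v].
have hinj : {in setT &, injective h}.
  move=> s1 s2 _ _ e; apply/permP => v.
  by have := congr1 (fun f : {ffun 'I_k -> 'I_k} => f v) e; rewrite !ffunE.
have Aeq : adm setT setT = h @: setT.
  apply/setP => f; apply/admP/imsetP.
    move=> [finj _ _].
    have fi : injective f by move=> a b; apply: finj; rewrite in_setT.
    exists (perm fi); first by rewrite in_setT.
    by apply/ffunP => v; rewrite ffunE permE.
  move=> [s _ ->]; split.
  - by move=> a b _ _; rewrite !ffunE; apply: perm_inj.
  - by move=> v _; rewrite in_setT.
  - by move=> v; rewrite in_setT.
rewrite Aeq big_imset //=.
rewrite [RHS](eq_bigl predT) //; last by move=> s; rewrite in_setT.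
apply: eq_bigr => s _.
rewrite /bracket_phi /term /Num /Den; congr (_ / _).
  by apply: eq_big => v; rewrite ?in_setT ?ffunE.
rewrite big_uniq ?uniqE //= pair_big_dep /=.
apply: eq_big; first by move=> [a b]; rewrite !in_setT.
by move=> [a b] _; rewrite !ffunE.
Qed.

Theorem main_gen : exists c : int, c != 0 /\
    forall x : 'I_k -> rat, injective x -> bracket E r x = c%:~R.
Proof.
have edi := edirr'.
have tT := treeT.
have no2 : forall a b, ed a b -> ed b a -> False.
  move=> a b; apply: (no2cycle edi tT); by rewrite in_setT.
have ntr : forall u v w, adj ed u v -> adj ed v w -> adj ed u w -> False.
  move=> u v w; apply: (notri edi tT); by rewrite in_setT.
have rT : r \in setT by rewrite in_setT.
exists (cS ed r setT); split.
  by have [] := sign_ind edi no2 (erefl _) tT rT.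
move=> x xinj; rewrite bracketE.
apply: (main_ind edi no2 ntr (erefl _)) => //; first by right.
by move=> a b _ _; apply: xinj.
Qed.

End Top.


Unset Implicit Arguments.

Theorem mainTheorem7 (k : nat) (E : seq ('I_k * 'I_k)) (r : 'I_k) :
  (0 < k)%N -> is_tree E ->
  exists c : int, c != 0 /\
    forall x : 'I_k -> rat, injective x -> bracket E r x = c%:~R.
Proof.
move=> _ tE; exact: (main_gen r tE).
Qed.
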